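(* Let $\mathcal{F}=(f_s:I_s\to[n]\mid s\in S)$ be an $S$-claw in $\Delta$. If $\mathcal{F}$ is compatible and either left active or right active, then $\mathcal{F}$ is cyclically compatible. Moreover, the following are equivalent: (1) $\mathcal{F}$ is cyclically compatible; (2) for every $m\in[n]$ the cyclic rotation $\mathcal{F}^{+m}$ is compatible; (3) there is $m\in[n]$ such that $\mathcal{F}^{+m}$ is left active and compatible; (4) there is $m\in[n]$ such that $\mathcal{F}^{+m}$ is right active and compatible.
   Context: $\Delta$: simplex category of $[n]=\{0<\dots<n\}$, weakly monotone maps. An $S$-claw on $[n]$ is a family $f_s:I_s\to[n]$; it is left (right) active if each $f_s$ preserves minima (maxima). Compatible: (BC1) for each $i\in[n]$ at most one $s$ has $f_s^{-1}\{i\}$ not a singleton; (BC2) for each $0<i\le n$ at most one $s$ has $\{i-1,i\}\not\subseteq f_s(I_s)$. Cyclically compatible: compatible and all but at most one $s$ satisfy $\{0,n\}\subseteq f_s(I_s)$. Cyclic rotation: for $m\in[n]$, let $[n]^{+m}$ be the set $\{0,\dots,n\}$ with the order $n-m+1\prec\dots\prec n\prec0\prec\dots\prec n-m$, and $I_s^{+m}$ the set $I_s$ with the order in which the elements of $f_s^{-1}\{n-m+1,\dots,n\}$ (in their original order) precede those of $f_s^{-1}\{0,\dots,n-m\}$ (in their original order); then $f_s^{+m}:I_s^{+m}\to[n]^{+m}$ (same underlying map) is order preserving, and $\mathcal{F}^{+m}=(f_s^{+m})_{s\in S}$, regarded as a claw in $\Delta$ via the unique order isomorphisms with standard ordinals.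 (This is the rotation induced by the cyclic category $\Lambda$, where $\Delta\cong\Lambda_{/\langle0\rangle}$.) *)

(* Defs.v *)
From mathcomp Require Import all_boot all_order all_algebra.
Set Implicit Arguments. Unset Strict Implicit. Unset Printing Implicit Defensive.

(* An S-claw in Delta on [n] = 'I_n.+1 is given by k : S -> nat and
   f s : 'I_(k s).+1 -> 'I_n.+1 (weakly monotone), i.e. f_s : [k_s] -> [n]. *)

Definition weakly_monotone (k n : nat) (g : 'I_k.+1 -> 'I_n.+1) : Prop :=
  forall i j : 'I_k.+1, (i <= j)%N -> (g i <= g j)%N.

Definition is_claw (S : Type) (n : nat) (k : S -> nat)
  (f : forall s, 'I_(k s).+1 -> 'I_n.+1) : Prop :=
  forall s, weakly_monotone (f s).

Definition at_most_one (S : Type) (P : S -> Prop) : Prop :=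
  forall s t, P s -> P t -> s = t.

Definition in_image (k n : nat) (g : 'I_k.+1 -> 'I_n.+1) (i : nat) : Prop :=
  exists j, (g j : nat) = i.

Definition left_active (S : Type) (n : nat) (k : S -> nat)
  (f : forall s, 'I_(k s).+1 -> 'I_n.+1) : Prop :=
  forall s, (f s ord0 : nat) = 0%N.

Definition right_active (S : Type) (n : nat) (k : S -> nat)
  (f : forall s, 'I_(k s).+1 -> 'I_n.+1) : Prop :=
  forall s, (f s ord_max : nat) = n.

Definition compatible (S : Type) (n : nat) (k : S -> nat)
  (f : forall s, 'I_(k s).+1 -> 'I_n.+1) : Prop :=
  (forall i : 'I_n.+1,
     at_most_one (fun s => #|[pred j | f s j == i]| <> 1%N))
  /\
  (forall i : nat, (0 < i <= n)%N ->
     at_most_one (fun s => ~ (in_image (f s) i.-1 /\ in_image (f s) i))).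

Definition cyclically_compatible (S : Type) (n : nat) (k : S -> nat)
  (f : forall s, 'I_(k s).+1 -> 'I_n.+1) : Prop :=
  compatible f /\
  at_most_one (fun s => ~ (in_image (f s) 0 /\ in_image (f s) n)).

(* Cyclic rotation F^{+m}, transported to standard ordinals through the
   unique order isomorphisms.  With a_s = #|f_s^{-1}{0,...,n-m}|, the
   rotated order on I_s = [k_s] has rank j |-> (j - a_s) mod (k_s+1), and the
   rotated order on [n] has rank x |-> (x + m) mod (n+1). *)
Definition rot_offset (k n : nat) (g : 'I_k.+1 -> 'I_n.+1) (m : 'I_n.+1) : nat :=
  #|[pred j | (g j <= n - m)%N]|.

Definition rotate (S : Type) (n : nat) (k : S -> nat)
  (f : forall s, 'I_(k s).+1 -> 'I_n.+1) (m : 'I_n.+1) :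
  forall s, 'I_(k s).+1 -> 'I_n.+1 :=
  fun s p => inZp (f s (inZp (p + rot_offset (f s) m)) + m).

(* Main.v *)
Require Import Defs.
From mathcomp Require Import all_boot all_order all_algebra zify.
From Stdlib Require Import Classical.
Unset Implicit Arguments. Unset Strict Implicit. Unset Printing Implicit Defensive.

Lemma modN2 a N : a < 2 * N -> (a < N /\ a %% N = a) \/ (N <= a /\ a %% N = a - N).
Proof.
move=> h; case: (ltnP a N) => h1; first by left; rewrite modn_small.
right; split => //; rewrite -{1}(subnK h1) modnDr modn_small //; lia.
Qed.

Lemma arith1 N x y m : x < N -> y < N -> m < N ->
  ((x + m) %% N == y) = (x == (y + N - m) %% N).
Proof.
move=> hx hy hm.
have [[h1 ->]|[h1 ->]] := @modN2 (x + m) N ltac:(lia);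
have [[h2 ->]|[h2 ->]] := @modN2 (y + N - m) N ltac:(lia);
apply/eqP/eqP; lia.
Qed.

Lemma rot_inj K c : injective (fun p : 'I_K.+1 => (inZp (p + c) : 'I_K.+1)).
Proof.
move=> p q /(congr1 val) /= /eqP; rewrite eqn_modDr !modn_small // => /eqP.
exact: val_inj.
Qed.

Lemma at_most_one_ext {S : Type} {P Q : S -> Prop} :
  (forall s, Q s -> P s) -> at_most_one P -> at_most_one Q.
Proof. by move=> h hP s t /h hs /h ht; apply: hP. Qed.

Lemma card_rot (T : finType) (r : T -> T) (P : pred T) : injective r ->
  #|[pred p | P (r p)]| = #|[pred j | P j]|.
Proof.
move=> ir; have := card_preimset [set j | P j] ir.
have -> : #|[set j | P j]| = #|[pred j | P j]| by apply: eq_card => p; rewrite !inE.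
by move=> <-; apply: eq_card => p; rewrite !inE.
Qed.

Lemma card_lt K t : t <= K -> #|[pred i : 'I_K | i < t]| = t.
Proof.
move=> htK.
rewrite cardE /enum_mem size_filter -enumT.
rewrite -(count_map val (fun x => x < t)) val_enum_ord.
rewrite -size_filter -{1}(add0n t) filter_iota_ltn // size_iota //.
Qed.

Lemma thresh K N (g : 'I_K.+1 -> 'I_N.+1) (hg : weakly_monotone g) w (j : 'I_K.+1) :
  (g j <= w) = (j < #|[pred i | g i <= w]|).
Proof.
case: (leqP (g j) w) => h; apply/esym.
- rewrite -(card_lt (K.+1) j.+1) ?ltn_ord //.
  apply/subset_leq_card/subsetP => i; rewrite !inE ltnS => hij.
  exact: leq_trans (hg _ _ hij) h.
- apply/negbTE; rewrite -leqNgt.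
  have <- : #|[pred i : 'I_K.+1 | i < j]| = j by rewrite card_lt // ltnW.
  apply/subset_leq_card/subsetP => i; rewrite !inE => hi.
  rewrite ltnNge; apply/negP => hji.
  have := hg _ _ hji; lia.
Qed.

Lemma amo_iff {S : Type} {P Q : S -> Prop} :
  (forall s, P s <-> Q s) -> at_most_one P <-> at_most_one Q.
Proof.
move=> h; split; apply: at_most_one_ext => s; by move/h.
Qed.

Section Rot.
Variables (S : Type) (n : nat) (k : S -> nat) (f : forall s, 'I_(k s).+1 -> 'I_n.+1).

Definition BC1 (g : forall s, 'I_(k s).+1 -> 'I_n.+1) :=
  forall i : 'I_n.+1, at_most_one (fun s => #|[pred j | g s j == i]| <> 1%N).

Definition E (x : nat) := at_most_one (fun s : S =>
  ~ (in_image (f s) (x %% n.+1) /\ in_image (f s) (x.+1 %% n.+1))).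

Lemma E_mod x : E x <-> E (x %% n.+1).
Proof.
rewrite /E modn_mod.
have -> : (x %% n.+1).+1 %% n.+1 = x.+1 %% n.+1 by rewrite -addn1 modnDml addn1.
by [].
Qed.

Lemma E_n0 x : n = 0 -> E x.
Proof.
move=> n0 s t hs; exfalso; apply: hs; subst n; rewrite !modn1.
by split; exists ord0; case: (f s ord0) => -[].
Qed.

Lemma fiber_rot m s (i' : 'I_n.+1) :
  #|[pred p | @rotate S n k f m s p == i']| = #|[pred j | f s j == inZp (i' + n.+1 - m)]|.
Proof.
rewrite /rotate.
apply: etrans (card_rot _ (fun p : 'I_(k s).+1 => (inZp (p + rot_offset (f s) m) : 'I_(k s).+1))
  (fun j => (inZp (f s j + m) : 'I_n.+1) == i') (rot_inj _ _)) _.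
apply: eq_card => j; rewrite !inE -!val_eqE /=.
by apply: arith1.
Qed.

Lemma image_rot m s y : y < n.+1 ->
  in_image (@rotate S n k f m s) y <-> in_image (f s) ((y + n.+1 - m) %% n.+1).
Proof.
move=> hy; split.
- case=> p /= /eqP; rewrite arith1 // => /eqP h.
  by exists (inZp (p + rot_offset (f s) m)).
- case=> j hj.
  pose r := (fun p : 'I_(k s).+1 => (inZp (p + rot_offset (f s) m) : 'I_(k s).+1)).
  have ir : injective r by apply: rot_inj.
  exists (invF ir j); rewrite /rotate /=.
  have -> : inZp (invF ir j + rot_offset (f s) m) = j by exact: (f_invF ir j).
  by apply/eqP; rewrite arith1 // hj.
Qed.

Lemma BC1_rot m : BC1 (rotate f m) <-> BC1 f.
Proof.
split=> h i.
- have ee : @inZp n (@inZp n (i + m) + n.+1 - m) = i.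
    apply: val_inj => /=; apply/esym/eqP; by rewrite -arith1 // ltn_pmod.
  eapply at_most_one_ext; last exact: (h (inZp (i + m))).
  move=> s /=; by rewrite fiber_rot ee.
- eapply at_most_one_ext; last exact: (h (inZp (i + n.+1 - m))).
  move=> s /=; by rewrite fiber_rot.
Qed.

Lemma E_eqmod a b : a %% n.+1 = b %% n.+1 -> E a <-> E b.
Proof. by move=> h; rewrite E_mod (E_mod b) h. Qed.

Lemma compat_rot_iff m : compatible (rotate f m) <->
  BC1 f /\ forall i, 0 < i <= n -> E (i.-1 + n.+1 - m).
Proof.
have key : forall i, 0 < i <= n -> forall s,
   ~ (in_image (@rotate S n k f m s) i.-1 /\ in_image (@rotate S n k f m s) i) <->
   ~ (in_image (f s) ((i.-1 + n.+1 - m) %% n.+1) /\ in_image (f s) ((i.-1 + n.+1 - m).+1 %% n.+1)).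
  move=> i hi s.
  have -> : (i.-1 + n.+1 - m).+1 = i + n.+1 - m by have := ltn_ord m; lia.
  rewrite (image_rot m s i.-1) ?(image_rot m s i); [by [] | lia | lia].
split.
- move=> [h1 h2]; split; first by apply/(BC1_rot m).
  move=> i hi; rewrite /E -(amo_iff (key i hi)); exact: h2.
- move=> [h1 h2]; split; first by apply/(BC1_rot m).
  move=> i hi; rewrite (amo_iff (key i hi)); exact: h2.
Qed.

Lemma cyc_iff : cyclically_compatible f <-> BC1 f /\ forall x, E x.
Proof.
split.
- move=> [[h1 h2] h3]; split => // x; apply/E_mod.
  move: (ltn_pmod x (ltn0Sn n)); move: (x %% n.+1) => y hy.
  rewrite /E (modn_small hy).
  case: (ltnP y n) => hyn.
  + rewrite modn_small //; exact: (h2 y.+1 ltac:(lia)).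
  + have -> : y = n by lia.
    rewrite modnn; apply: (at_most_one_ext _ h3) => s hs [a b]; exact: hs.
- move=> [h1 h2]; split; first split => //.
  + move=> i hi; have := h2 i.-1; rewrite /E (modn_small (_ : i.-1 < n.+1)); last lia.
    rewrite prednK ?modn_small //; lia.
  + have := h2 n; rewrite /E modn_small // modnn.
    apply: at_most_one_ext => s hs [a b]; exact: hs.
Qed.

Lemma common_v : compatible f -> exists v : 'I_n.+1, forall s, in_image (f s) v.
Proof.
move=> [_ h2]; apply: NNPP => hn.
have hm : forall v : 'I_n.+1, exists s, ~ in_image (f s) v.
  move=> v; apply: NNPP => hv; apply: hn; exists v => s.
  apply: NNPP => hs; apply: hv; by exists s.
have [s0 h0] := hm ord0.
have hall : forall x, x <= n -> ~ in_image (f s0) x.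
  elim => [_|x IH hx]; first exact: h0.
  have [t ht] := hm (inord x.+1).
  rewrite inordK in ht; last lia.
  have e : s0 = t.
    apply: (h2 x.+1 ltac:(lia) s0 t).
    - by move=> [a _]; apply: IH a; lia.
    - by move=> [_ b].
  by rewrite e.
apply: (hall (f s0 ord0)); first by rewrite -ltnS ltn_ord.
by exists ord0.
Qed.

End Rot.

Ltac md a N := let H := fresh in have H := @modN2 a N ltac:(lia);
  let r := fresh "r" in let Er := fresh "Er" in
  remember (a %% N) as r eqn:Er in *; clear Er;
  destruct H as [[? ?]|[? ?]].

Arguments BC1 {S n k} g.
Arguments E {S n k} f x.
Arguments E_mod {S n k f} x.
Arguments E_n0 {S n k f} x _.
Arguments E_eqmod {S n k f} a b _.
Arguments image_rot {S n k f} m s y _.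
Arguments compat_rot_iff {S n k f} m.
Arguments cyc_iff {S n k f}.
Arguments common_v {S n k f} _.

Theorem lemma4p2p6 (S : Type) (n : nat) (k : S -> nat)
  (f : forall s, 'I_(k s).+1 -> 'I_n.+1) (Hclaw : is_claw f) :
  (compatible f -> left_active f \/ right_active f -> cyclically_compatible f)
  /\
  [<-> cyclically_compatible f;
       forall m : 'I_n.+1, compatible (rotate f m);
       exists m : 'I_n.+1, left_active (rotate f m) /\ compatible (rotate f m);
       exists m : 'I_n.+1, right_active (rotate f m) /\ compatible (rotate f m)].
Proof.
have c12 : cyclically_compatible f -> forall m : 'I_n.+1, compatible (rotate f m).
  move/cyc_iff => [hB hE] m; apply/compat_rot_iff; split => // i _; exact: hE.
split.
  move=> hc hact; split => //.
  have [n0|npos] := posnP n.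
  + move=> s t hs; exfalso; apply: hs.
    by split; exists ord0; have := ltn_ord (f s ord0); lia.
  case: hact => [hl|hr].
  + apply: (at_most_one_ext _ (hc.2 n ltac:(lia))) => s hs [_ b]; apply: hs; split => //.
    by exists ord0; apply: hl.
  + apply: (at_most_one_ext _ (hc.2 1 ltac:(lia))) => s hs [a _]; apply: hs; split => //.
    by exists ord_max; apply: hr.
have c21 : (forall m : 'I_n.+1, compatible (rotate f m)) -> cyclically_compatible f.
  move=> h; apply/cyc_iff.
  have [hB hE0] := (compat_rot_iff ord0).1 (h ord0); split => // x.
  have [n0|npos] := posnP n; first exact: E_n0.
  apply/E_mod; move: (ltn_pmod x (ltn0Sn n)); move: (x %% n.+1) => y hy.
  case: (ltnP y n) => hyn.
  - have h' := hE0 y.+1 ltac:(lia); apply: (E_eqmod _ _ _).1 h'.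
    have -> : nat_of_ord (@ord0 n) = 0 by [].
    md (y.+1.-1 + n.+1 - 0) n.+1; md y n.+1; lia.
  - have [_ hE] := (compat_rot_iff (inord 1)).1 (h (inord 1)).
    have h' := hE 1 ltac:(lia); apply: (E_eqmod _ _ _).1 h'.
    rewrite inordK; last lia.
    md (1.-1 + n.+1 - 1) n.+1; md y n.+1; lia.
have c31 : (exists m : 'I_n.+1, left_active (rotate f m) /\ compatible (rotate f m)) ->
    cyclically_compatible f.
  move=> [m [hl hc]]; have [hB hE] := (compat_rot_iff m).1 hc.
  apply/cyc_iff; split => // x.
  have [n0|npos] := posnP n; first exact: E_n0.
  have hv : forall s, in_image (f s) ((0 + n.+1 - m) %% n.+1).
    move=> s; apply/(image_rot m s 0 _).1 => //; exists ord0; exact: hl s.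
  apply/E_mod; move: (ltn_pmod x (ltn0Sn n)); move: (x %% n.+1) => y hy.
  have hm := ltn_ord m.
  case: (ltnP ((y + m) %% n.+1) n) => hz.
  - have h' := hE ((y + m) %% n.+1).+1 ltac:(lia); apply: (E_eqmod _ _ _).1 h'.
    md (((y + m) %% n.+1).+1.-1 + n.+1 - m) n.+1; md (y + m) n.+1; md y n.+1; lia.
  - have h' := hE n ltac:(lia).
    have e1 : (n.-1 + n.+1 - m).+1 %% n.+1 = y %% n.+1.
      md (y + m) n.+1; md (n.-1 + n.+1 - m).+1 n.+1; md y n.+1; lia.
    have e2 : y.+1 %% n.+1 = (0 + n.+1 - m) %% n.+1.
      md (y + m) n.+1; md y.+1 n.+1; md (0 + n.+1 - m) n.+1; lia.
    apply: (at_most_one_ext _ h') => s hs [a b]; apply: hs; split.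
    + by rewrite -e1.
    + rewrite e2; exact: hv.
have c41 : (exists m : 'I_n.+1, right_active (rotate f m) /\ compatible (rotate f m)) ->
    cyclically_compatible f.
  move=> [m [hr hc]]; have [hB hE] := (compat_rot_iff m).1 hc.
  apply/cyc_iff; split => // x.
  have [n0|npos] := posnP n; first exact: E_n0.
  have hv : forall s, in_image (f s) ((n + n.+1 - m) %% n.+1).
    move=> s; apply/(image_rot m s n _).1 => //; exists ord_max; exact: hr s.
  apply/E_mod; move: (ltn_pmod x (ltn0Sn n)); move: (x %% n.+1) => y hy.
  have hm := ltn_ord m.
  case: (ltnP ((y + m) %% n.+1) n) => hz.
  - have h' := hE ((y + m) %% n.+1).+1 ltac:(lia); apply: (E_eqmod _ _ _).1 h'.
    md (((y + m) %% n.+1).+1.-1 + n.+1 - m) n.+1; md (y + m) n.+1; md y n.+1; lia.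
  - have h' := hE 1 ltac:(lia).
    have e1 : (1.-1 + n.+1 - m) %% n.+1 = y.+1 %% n.+1.
      md (y + m) n.+1; md (1.-1 + n.+1 - m) n.+1; md y.+1 n.+1; lia.
    have e2 : y %% n.+1 = (n + n.+1 - m) %% n.+1.
      md (y + m) n.+1; md y n.+1; md (n + n.+1 - m) n.+1; lia.
    apply: (at_most_one_ext _ h') => s hs [a b]; apply: hs; split.
    + rewrite e2; exact: hv.
    + by rewrite -e1.
have c13 : cyclically_compatible f ->
    exists m : 'I_n.+1, left_active (rotate f m) /\ compatible (rotate f m).
  move=> hcyc; have [v hv] := common_v hcyc.1.
  have [v0|vpos] := posnP v.
  - exists ord0; split; last exact: c12 hcyc ord0.
    move=> s; rewrite /rotate /=.
    have ha : rot_offset (f s) ord0 = (k s).+1.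
      rewrite /rot_offset -[RHS](card_ord (k s).+1); apply: eq_card => j.
      by rewrite !inE subn0 -ltnS ltn_ord.
    rewrite ha add0n.
    have -> : (inZp (k s).+1 : 'I_(k s).+1) = ord0 by apply: val_inj; rewrite /= modnn.
    have [j0 hj0] := hv s.
    have := Hclaw s ord0 j0 (leq0n _).
    rewrite addn0 => hle; rewrite modn_small; lia.
  - exists (inord (n.+1 - v)); split; last exact: c12 hcyc _.
    move=> s; rewrite /rotate /rot_offset /= inordK; last by have := ltn_ord v; lia.
    set a := #|[pred j | f s j <= n - (n.+1 - v)]|.
    have th := thresh (k s) n (f s) (Hclaw s) (n - (n.+1 - v)).
    have [j0 hj0] := hv s.
    have hj0a : ~~ (j0 < a) by rewrite -th; have := ltn_ord v; lia.
    have haK : a < (k s).+1 by have := ltn_ord j0; lia.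
    set ja := (inZp (0 + a) : 'I_(k s).+1).
    have hja : nat_of_ord ja = a by rewrite /= add0n modn_small.
    have h1 : ~~ (ja < a) by rewrite hja ltnn.
    rewrite -th in h1.
    have h2 := Hclaw s ja j0 ltac:(lia).
    have hv' := ltn_ord v.
    have -> : nat_of_ord (f s ja) = v by lia.
    have -> : v + (n.+1 - v) = n.+1 by lia.
    by rewrite modnn.
have c14 : cyclically_compatible f ->
    exists m : 'I_n.+1, right_active (rotate f m) /\ compatible (rotate f m).
  move=> hcyc; have [v hv] := common_v hcyc.1.
  have hvn := ltn_ord v.
  exists (inord (n - v)); split; last exact: c12 hcyc _.
  move=> s; rewrite /rotate /rot_offset /= inordK; last lia.
  set a := #|[pred j | f s j <= n - (n - v)]|.
  have th := thresh (k s) n (f s) (Hclaw s) (n - (n - v)).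
  have [j0 hj0] := hv s.
  have hj0a : j0 < a by rewrite -th; lia.
  have haK : a <= (k s).+1.
    by rewrite -[X in _ <= X](card_ord (k s).+1); apply: max_card.
  set ja := (inZp (k s + a) : 'I_(k s).+1).
  have hja : nat_of_ord ja = a.-1.
    rewrite /=; md (k s + a) (k s).+1; lia.
  have h1 : ja < a by rewrite hja; lia.
  rewrite -th in h1.
  have h2 := Hclaw s j0 ja ltac:(lia).
  have -> : nat_of_ord (f s ja) = v by lia.
  rewrite modn_small; lia.
tfae.
- exact: c12.
- by move=> h; apply: c13; apply: c21.
- by move=> h; apply: c14; apply: c31.
- exact: c41.
Qed.
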